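(* Let $w\ge 5$ and let $C_1$ be the set of vertices $x=(x_1,\dots,x_{2w})$ of the Johnson graph $J(2w,w)$ such that $(x_1,x_2,x_3,x_4,x_5)\in B$, where $B=\{(0,0,0,0,0),(0,0,1,0,0),(0,0,0,1,0),(0,0,0,0,1),(1,0,1,0,0),(0,1,0,1,0),(0,0,1,0,1),(0,0,0,1,1),(1,1,1,1,1),(1,1,0,1,1),(1,1,1,0,1),(1,1,1,1,0),(0,1,0,1,1),(1,0,1,0,1),(1,1,0,1,0),(1,1,1,0,0)\}$, and let $C_2$ be the complement of $C_1$. Then $(C_1,C_2)$ is an equitable partition with quotient matrix $\begin{pmatrix} w^2-2w & 2w\\ 2w-2 & w^2-2w+2\end{pmatrix}$.
   Context: The Johnson graph $J(n,w)$ has as vertices the binary vectors of length $n$ with exactly $w$ ones; two vertices are adjacent iff they have exactly $w-1$ common ones. A partition $(C_1,C_2)$ of the vertex set is equitable with quotient matrix $S=(s_{ij})$ if every vertex of $C_i$ has exactly $s_{ij}$ neighbours in $C_j$. *)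

(* Defs.v *)
From mathcomp Require Import all_boot.
Set Implicit Arguments. Unset Strict Implicit. Unset Printing Implicit Defensive.

Definition jvert (n w : nat) : {set {ffun 'I_n -> bool}} :=
  [set x : {ffun 'I_n -> bool} | #|[set i | x i]| == w].

Definition jadj (n w : nat) (x y : {ffun 'I_n -> bool}) : bool :=
  #|[set i | x i && y i]| == w.-1.

(* The j-th coordinate (0-based) of x, i.e. x_{j+1} in the paper. *)
Definition coord (n : nat) (x : {ffun 'I_n -> bool}) (j : nat) : bool :=
  [exists i : 'I_n, (val i == j) && x i].

Definition B : seq (seq bool) :=
  [:: [:: false; false; false; false; false];
      [:: false; false; true ; false; false];
      [:: false; false; false; true ; false];
      [:: false; false; false; false; true ];
      [:: true ; false; true ; false; false];
      [:: false; true ; false; true ; false];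
      [:: false; false; true ; false; true ];
      [:: false; false; false; true ; true ];
      [:: true ; true ; true ; true ; true ];
      [:: true ; true ; false; true ; true ];
      [:: true ; true ; true ; false; true ];
      [:: true ; true ; true ; true ; false];
      [:: false; true ; false; true ; true ];
      [:: true ; false; true ; false; true ];
      [:: true ; true ; false; true ; false];
      [:: true ; true ; true ; false; false] ].

Definition C1 (w : nat) : {set {ffun 'I_(2 * w) -> bool}} :=
  [set x in jvert (2 * w) w |
     [:: coord x 0; coord x 1; coord x 2; coord x 3; coord x 4] \in B].

Definition C2 (w : nat) : {set {ffun 'I_(2 * w) -> bool}} :=
  jvert (2 * w) w :\: C1 w.

Definition nbrs_in (T : finType) (V : {set T}) (adj : rel T) (x : T) (C : {set T}) : nat :=
  #|[set y in V | (y \in C) && adj x y]|.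

Definition equitable2 (T : finType) (V : {set T}) (adj : rel T)
    (D1 D2 : {set T}) (s11 s12 s21 s22 : nat) : Prop :=
  [/\ D1 :|: D2 = V, [disjoint D1 & D2], (D1 != set0) && (D2 != set0),
      (forall x, x \in D1 -> nbrs_in V adj x D1 = s11 /\ nbrs_in V adj x D2 = s12) &
      (forall x, x \in D2 -> nbrs_in V adj x D1 = s21 /\ nbrs_in V adj x D2 = s22)].

(* Main.v *)
Require Import Defs.
From mathcomp Require Import all_boot zify.
Set Implicit Arguments. Unset Strict Implicit. Unset Printing Implicit Defensive.

Definition swap n (x : {ffun 'I_n -> bool}) (i j : 'I_n) : {ffun 'I_n -> bool} :=
  [ffun k => if k == i then false else if k == j then true else x k].

Lemma coordE n (x : {ffun 'I_n -> bool}) (k : 'I_n) : coord x k = x k.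
Proof.
apply/existsP/idP => [[i /andP[/eqP e xi]]|xk]; last by exists k; rewrite eqxx.
by have -> : k = i by apply: val_inj.
Qed.

Lemma swap_in n w (x : {ffun 'I_n -> bool}) i j :
  x \in jvert n w -> x i -> ~~ x j ->
  (swap x i j \in jvert n w) /\ @jadj n w x (swap x i j).
Proof.
rewrite /jvert /jadj !inE => /eqP cx xi xj.
have ij : i != j by apply/eqP => e; rewrite -e xi in xj.
have E1 : [set k | swap x i j k] = j |: ([set k | x k] :\ i).
  apply/setP => k; rewrite !inE ffunE.
  case: (eqVneq k i) => [->|ki]; first by rewrite (negbTE ij).
  by case: (eqVneq k j) => [->|] //=.
have E2 : [set k | x k && swap x i j k] = [set k | x k] :\ i.
  apply/setP => k; rewrite !inE ffunE.
  case: (eqVneq k i) => [->|ki]; first by rewrite andbF.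
  case: (eqVneq k j) => [->|kj] /=; first by rewrite (negbTE xj).
  by case: (x k).
have c1 : #|[set k | x k] :\ i| = w.-1.
  by move: (cardsD1 i [set k | x k]); rewrite cx inE xi /= => ->.
have w0 : 0 < w by rewrite -cx; apply/card_gt0P; exists i; rewrite inE.
split; first by rewrite E1 cardsU1 c1 !inE (negbTE xj) andbF /=; apply/eqP; lia.
by rewrite E2 c1.
Qed.

Lemma nbrs_count n w (x : {ffun 'I_n -> bool}) (C : {set {ffun 'I_n -> bool}}) :
  0 < w -> x \in jvert n w ->
  nbrs_in (jvert n w) (@jadj n w) x C =
  \sum_(i < n) \sum_(j < n) (x i && ~~ x j && (swap x i j \in C)).
Proof.
move=> w0 hx.
set S := [set p : 'I_n * 'I_n | x p.1 && ~~ x p.2 && (swap x p.1 p.2 \in C)].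
have -> : \sum_(i < n) \sum_(j < n) (x i && ~~ x j && (swap x i j \in C)) = #|S|.
  rewrite pair_big -sum1_card [RHS]big_mkcond /=; apply: eq_bigr => p _.
  by rewrite inE; case: (_ && _).
rewrite /nbrs_in.
have -> : [set y in jvert n w | (y \in C) && @jadj n w x y] = (fun p => swap x p.1 p.2) @: S.
  apply/setP => y; rewrite inE; apply/andP/imsetP.
  - case=> yV /andP[yC adj].
    move: hx yV adj; rewrite /jvert /jadj !inE => /eqP cx /eqP cy /eqP cxy.
    have I : [set k | x k && y k] = [set k | x k] :&: [set k | y k].
      by apply/setP => k; rewrite !inE.
    have d1 : #|[set k | x k] :\: [set k | y k]| == 1.
      by move: (cardsID [set k | y k] [set k | x k]); rewrite -I cxy cx; lia.
    have d2 : #|[set k | y k] :\: [set k | x k]| == 1.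
      by move: (cardsID [set k | x k] [set k | y k]); rewrite setIC -I cxy cy; lia.
    have [i Ei] := cards1P d1.
    have [j Ej] := cards1P d2.
    have hi : (i \in [set k | x k] :\: [set k | y k]) by rewrite Ei set11.
    have hj : (j \in [set k | y k] :\: [set k | x k]) by rewrite Ej set11.
    rewrite !inE in hi hj.
    case/andP: hi => yi xi; case/andP: hj => xj yj.
    have ey : y = swap x i j.
      apply/ffunP => k; rewrite ffunE.
      case: (eqVneq k i) => [->|ki]; first by apply/negbTE.
      case: (eqVneq k j) => [->|kj]; first by [].
      have h1 : k \notin [set k | x k] :\: [set k | y k] by rewrite Ei inE.
      have h2 : k \notin [set k | y k] :\: [set k | x k] by rewrite Ej inE.
      rewrite !inE in h1 h2.
      by move: h1 h2; case: (x k); case: (y k).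
    by exists (i, j) => //; rewrite inE /= xi xj -ey yC.
  - case=> [[i j]]; rewrite inE /= => /andP[/andP[xi xj] sC] ->.
    by have [-> ->] := swap_in hx xi xj; rewrite sC.
rewrite card_in_imset //.
move=> [i j] [i' j']; rewrite !inE /= => /andP[/andP[xi xj] _] /andP[/andP[xi' xj'] _] e.
have Ei : i = i'.
  case: (eqVneq i i') => // ne.
  have := congr1 (fun f : {ffun _} => f i) e.
  by rewrite /= !ffunE eqxx (negbTE ne) xi; case: (i == j').
subst i'.
have ne1 : (j' == i) = false by apply/negbTE/eqP => e'; rewrite e' xi in xj'.
congr (_, _); case: (eqVneq j j') => // ne.
have := congr1 (fun f : {ffun _} => f j') e.
by rewrite /= !ffunE eqxx ne1 eq_sym (negbTE ne) (negbTE xj').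
Qed.
Definition sw (f : nat -> bool) (i j : nat) (k : nat) : bool :=
  if k == i then false else if k == j then true else f k.
Definition pre (f : nat -> bool) : seq bool := [:: f 0; f 1; f 2; f 3; f 4].
Definition T (f : nat -> bool) (fl : bool) i j := (pre (sw f i j) \in B) == fl.

Lemma final (f : nat -> bool) fl O Z w :
  O + (f 0 + f 1 + f 2 + f 3 + f 4) = w -> O + Z + 5 = 2 * w ->
  \sum_(0 <= i < 5) f i * (\sum_(0 <= j < 5) ~~ f j * T f fl i j + T f fl i 5 * Z)
  + O * (\sum_(0 <= j < 5) ~~ f j * T f fl 5 j + T f fl 5 5 * Z)
  = if fl then (if pre f \in B then w ^ 2 - 2 * w else 2 * w - 2)
    else (if pre f \in B then 2 * w else w ^ 2 - 2 * w + 2).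
Proof.
rewrite /index_iota /= !big_cons !big_nil /T /pre /sw /=.
case: (f 0); case: (f 1); case: (f 2); case: (f 3); case: (f 4); case: fl => /=; nia.
Qed.

Lemma coord_swap n (x : {ffun 'I_n -> bool}) (i j : 'I_n) k :
  k < n -> coord (swap x i j) k = sw (coord x) i j k.
Proof.
move=> kn; have := coordE (swap x i j) (Ordinal kn); rewrite /= => ->.
rewrite /sw; have := coordE x (Ordinal kn); rewrite /= => ->.
by rewrite ffunE.
Qed.

Lemma Tfar1 f fl i j : 5 <= i -> T f fl i j = T f fl 5 j.
Proof. by case: i => [|[|[|[|[|i]]]]]. Qed.

Lemma Tfar2 f fl i j : 5 <= j -> T f fl i j = T f fl i 5.
Proof. by case: j => [|[|[|[|[|j]]]]]. Qed.

Lemma core (f : nat -> bool) n fl : 5 <= n ->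
  \sum_(0 <= i < n) \sum_(0 <= j < n) f i * (~~ f j * T f fl i j) =
  \sum_(0 <= i < 5) f i * (\sum_(0 <= j < 5) ~~ f j * T f fl i j + T f fl i 5 * \sum_(5 <= j < n) ~~ f j)
  + (\sum_(5 <= i < n) f i) * (\sum_(0 <= j < 5) ~~ f j * T f fl 5 j + T f fl 5 5 * \sum_(5 <= j < n) ~~ f j).
Proof.
move=> n5.
have Hi : forall i, \sum_(0 <= j < n) ~~ f j * T f fl i j =
   \sum_(0 <= j < 5) ~~ f j * T f fl i j + T f fl i 5 * \sum_(5 <= j < n) ~~ f j.
  move=> i; rewrite (@big_cat_nat _ _ _ 5) //=; congr (_ + _).
  rewrite big_distrr /=; apply: eq_big_nat => j /andP[j5 _].
  by rewrite (Tfar2 _ _ _ j5) mulnC.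
under eq_bigr do rewrite -big_distrr /= Hi.
rewrite (@big_cat_nat _ _ _ 5) //=; congr (_ + _).
rewrite big_distrl /=; apply: eq_big_nat => i /andP[i5 _].
congr (_ * (_ + _)); last by rewrite (Tfar1 _ _ _ i5).
by apply: eq_big_nat => j _; rewrite (Tfar1 _ _ _ i5).
Qed.

Lemma sum_ord2 n (F : nat -> nat -> nat) :
  \sum_(i < n) \sum_(j < n) F i j = \sum_(0 <= i < n) \sum_(0 <= j < n) F i j.
Proof. by rewrite big_mkord; apply: eq_bigr => i _; rewrite big_mkord. Qed.

Lemma nb w (x : {ffun 'I_(2 * w) -> bool}) fl : 5 <= w -> x \in jvert (2 * w) w ->
  nbrs_in (jvert (2 * w) w) (@jadj (2 * w) w) x (if fl then C1 w else C2 w) =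
  if fl then (if pre (coord x) \in B then w ^ 2 - 2 * w else 2 * w - 2)
  else (if pre (coord x) \in B then 2 * w else w ^ 2 - 2 * w + 2).
Proof.
move=> hw hx; rewrite nbrs_count //; last by lia.
have e : forall i j : 'I_(2 * w),
    (x i && ~~ x j && (swap x i j \in (if fl then C1 w else C2 w)) : nat) =
    coord x i * (~~ coord x j * T (coord x) fl i j).
  move=> i j; rewrite !coordE; case xi: (x i) => //; case xj: (x j) => //=.
  have [sV _] := swap_in hx xi (negbT xj).
  rewrite /T /pre; case: fl; rewrite /C2 ?in_setD /C1 in_set sV /=;
    rewrite !coord_swap; try lia; by case: (_ \in B).
under eq_bigr do under eq_bigr do rewrite e.
rewrite (sum_ord2 _ (fun i j => coord x i * (~~ coord x j * T (coord x) fl i j))).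
rewrite core; last by lia.
have cx : \sum_(0 <= k < 2 * w) coord x k = w.
  move: hx; rewrite /jvert in_set => /eqP cx.
  rewrite big_mkord -[RHS]cx -sum1_card [RHS]big_mkcond /=; apply: eq_bigr => i _.
  by rewrite in_set coordE; case: (x i).
have e5 : \sum_(0 <= k < 5) coord x k = coord x 0 + coord x 1 + coord x 2 + coord x 3 + coord x 4.
  by rewrite /index_iota /= !big_cons big_nil; lia.
apply: final.
- by move: cx; rewrite (@big_cat_nat _ _ _ 5) //= ?e5; lia.
- rewrite -big_split /=.
  have -> : \sum_(5 <= i < 2 * w) (coord x i + ~~ coord x i) = \sum_(5 <= i < 2 * w) 1.
    by apply: eq_bigr => i _; case: (coord x i).
  rewrite sum_nat_const_nat; lia.
Qed.

Theorem mainTheorem4 (w : nat) (hw : 5 <= w) :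
  equitable2 (jvert (2 * w) w) (@jadj (2 * w) w) (C1 w) (C2 w)
    (w ^ 2 - 2 * w) (2 * w) (2 * w - 2) (w ^ 2 - 2 * w + 2).
Proof.
have C1P : forall y, (y \in C1 w) = (y \in jvert (2 * w) w) && (pre (coord y) \in B).
  by move=> y; rewrite /C1 in_set.
have C2P : forall y, (y \in C2 w) = (y \in jvert (2 * w) w) && ~~ (pre (coord y) \in B).
  by move=> y; rewrite /C2 in_setD C1P; case: (y \in jvert (2 * w) w); case: (pre (coord y) \in B).
set x0 : {ffun 'I_(2 * w) -> bool} := [ffun i : 'I_(2 * w) => i < w].
have x0V : x0 \in jvert (2 * w) w.
  rewrite /jvert in_set; apply/eqP.
  rewrite -sum1_card big_mkcond /=.
  have -> : \sum_(i < 2 * w) (if i \in [set i | x0 i] then 1 else 0) = \sum_(i < 2 * w) (i < w).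
    by apply: eq_bigr => i _; rewrite in_set ffunE; case: (_ < w).
  rewrite -(big_mkord xpredT (fun i => (i < w) : nat)) (@big_cat_nat _ _ _ w) //=; last by lia.
  rewrite (@eq_big_nat _ _ _ 0 w _ (fun _ => 1)); last by move=> i /andP[_ ->].
  rewrite (@eq_big_nat _ _ _ w (2 * w) _ (fun _ => 0)); last by move=> i /andP[h _]; rewrite ltnNge h.
  by rewrite !sum_nat_const_nat; lia.
have h0 : forall k, k < 5 -> coord x0 k.
  move=> k k5; have kn : k < 2 * w by lia.
  by have := coordE x0 (Ordinal kn); rewrite /= => ->; rewrite ffunE /=; lia.
have x0C1 : x0 \in C1 w by rewrite C1P x0V /pre !h0.
split.
- apply/setP => y; rewrite in_setU C1P C2P.
  by case: (y \in jvert (2 * w) w); case: (pre (coord y) \in B).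
- rewrite disjoints_subset; apply/subsetP => y; rewrite in_setC C1P C2P.
  by case: (y \in jvert (2 * w) w); case: (pre (coord y) \in B).
- apply/andP; split; apply/set0Pn; first by exists x0.
  have := nb false hw x0V; rewrite /= /pre !h0 //= /nbrs_in => e.
  have : 0 < #|[set y in jvert (2 * w) w | (y \in C2 w) && jadj w x0 y]| by rewrite e; lia.
  case/card_gt0P => y; rewrite in_set => /andP[_ /andP[yC _]]; by exists y.
- move=> x; rewrite C1P => /andP[xV xB].
  by have := nb true hw xV; have := nb false hw xV; rewrite /= xB => -> ->.
- move=> x; rewrite C2P => /andP[xV /negbTE xB].
  by have := nb true hw xV; have := nb false hw xV; rewrite /= xB => -> ->.
Qed.
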